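(* In any Minkowski space $X$, if $\{\mathbf{o}\mathbf{x}_1,\dots,\mathbf{o}\mathbf{x}_n\}$ is a floating FT configuration, then $\{\mathbf{o}\mathbf{x}_1,\dots,\mathbf{o}\mathbf{x}_{n-1}\}$ is an absorbing FT configuration.
   Context: A Minkowski space is a finite-dimensional real normed space $(X,\|\cdot\|)$. A Fermat-Torricelli (FT) point of finitely many points $\mathbf{y}_1,\dots,\mathbf{y}_m$ is a minimizer of $\mathbf{x}\mapsto\sum_i\|\mathbf{x}-\mathbf{y}_i\|$. A configuration $\{\mathbf{x}_0\mathbf{x}_i: i=1,\dots,n\}$ is a set of segments from $\mathbf{x}_0$ with $\mathbf{x}_i\neq\mathbf{x}_0$; it is a floating FT configuration if $\mathbf{x}_0$ is an FT point of $\{\mathbf{x}_1,\dots,\mathbf{x}_n\}$, and an absorbing FT configuration if $\mathbf{x}_0$ is an FT point of $\{\mathbf{x}_0,\mathbf{x}_1,\dots,\mathbf{x}_n\}$. *)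

(* Defs.v *)
(* A Minkowski space (finite-dimensional real normed space)
   is modelled as 'rV[R]_d (R : realType, any d) with an arbitrary norm N. *)
From mathcomp Require Import all_boot all_order all_algebra.
From mathcomp Require Import reals.
Set Implicit Arguments. Unset Strict Implicit. Unset Printing Implicit Defensive.
Import Order.TTheory GRing.Theory Num.Theory.
Local Open Scope ring_scope.

Definition is_norm (R : realType) (d : nat) (N : 'rV[R]_d -> R) : Prop :=
  [/\ forall x, N x = 0 -> x = 0,
      forall (a : R) x, N (a *: x) = `|a| * N x &
      forall x y, N (x + y) <= N x + N y].

Definition FT_point (R : realType) (d : nat) (N : 'rV[R]_d -> R)
    (ys : seq 'rV[R]_d) (x0 : 'rV[R]_d) : Prop :=
  forall x, \sum_(y <- ys) N (x0 - y) <= \sum_(y <- ys) N (x - y).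

Definition configuration (R : realType) (d : nat) (x0 : 'rV[R]_d)
    (xs : seq 'rV[R]_d) : Prop := forall y, y \in xs -> y != x0.

Definition floating_FT (R : realType) (d : nat) (N : 'rV[R]_d -> R)
    (x0 : 'rV[R]_d) (xs : seq 'rV[R]_d) : Prop :=
  configuration x0 xs /\ FT_point N xs x0.

Definition absorbing_FT (R : realType) (d : nat) (N : 'rV[R]_d -> R)
    (x0 : 'rV[R]_d) (xs : seq 'rV[R]_d) : Prop :=
  configuration x0 xs /\ FT_point N (x0 :: xs) x0.

(* Main.v *)
Require Import Defs.
From mathcomp Require Import all_boot all_order all_algebra.
From mathcomp Require Import reals.
Local Open Scope ring_scope.
Import Order.TTheory GRing.Theory Num.Theory.

Theorem corollary3p7 (R : realType) (d : nat) (N : 'rV[R]_d -> R)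
    (o : 'rV[R]_d) (xs : seq 'rV[R]_d) (xn : 'rV[R]_d) :
  is_norm N -> floating_FT N o (rcons xs xn) -> absorbing_FT N o xs.
Proof.
move=> [_ Nsc Ntr] [Hc Hft]; split.
  by move=> y yin; apply: Hc; rewrite mem_rcons inE yin orbT.
move=> x; rewrite !big_cons.
have N0 : N 0 = 0.
  by have := Nsc 0 0; rewrite scale0r normr0 mul0r.
rewrite subrr N0 add0r.
have := Hft x; rewrite -!cats1 !big_cat /= !big_seq1 => H.
have T : N (x - xn) <= N (x - o) + N (o - xn).
  by have := Ntr (x - o) (o - xn); rewrite addrA subrK.
have : \sum_(y <- xs) N (o - y) + N (o - xn) <=
       \sum_(y <- xs) N (x - y) + (N (x - o) + N (o - xn)).
  by apply: (le_trans H); rewrite lerD2l.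
by rewrite addrA lerD2r addrC.
Qed.
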